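(* Let $\alpha:X\to\mathbb PLX$ be a measurable map (a continuous probabilistic transition system). Let $\tilde\alpha^\#=\langle\tilde\alpha^\#_1,\tilde\alpha^\#_*,a\mapsto\tau_a\rangle:\mathbb DX\to F\mathbb DX$ be given by $$\tilde\alpha^\#_1(m)=\int_X\alpha(-)(LX)\,dm,\quad \tilde\alpha^\#_*(m)=\int_X\alpha(-)(1)\,dm,\quad \tau_a(m)(S)=\int_X\alpha(-)(\{a\}\times S)\,dm\ (S\in\Sigma_X).$$ Then $\tilde\alpha^\#$ satisfies $\tilde\alpha^\#_1(m)=\tilde\alpha^\#_*(m)+\sum_{a\in A}\tilde\alpha^\#_1(\tau_a(m))$ for all $m\in\mathbb DX$, so there is a unique $F$-coalgebra morphism $[\![-]\!]:\mathbb DX\to\mathbb DA^\infty$ from $\tilde\alpha^\#$ to $\Pi$. Writing $\langle\!\langle x\rangle\!\rangle=[\![\eta_X(x)]\!]$ for $x\in X$, we have for all $m\in\mathbb DX$ and all $S\in S_\infty$: $$[\![m]\!](S)=\int_X\langle\!\langle -\rangle\!\rangle(S)\,dm.$$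
   Context: Work in $\mathbf{Meas}$. $\mathbb I=[0,1]$; $A$ finite alphabet (discrete $\sigma$-algebra); $1=\{*\}$. $LX=A\times X+1$ with $\sigma$-algebra $(\mathcal P(A)\otimes\Sigma_X)\oplus\mathcal P(1)$. For a measurable space $X$, $\mathbb DX$ is the set of sub-probability measures on $X$ and $\mathbb PX\subseteq\mathbb DX$ the probability measures, both with the $\sigma$-algebra generated by $m\mapsto m(S)$; $\eta_X(x)$ is the Dirac measure at $x$. $A^\infty=A^*\cup A^\omega$ with $\sigma$-algebra generated by $S_\infty=\{\emptyset\}\cup\{\{w\}\mid w\in A^*\}\cup\{wA^\infty\mid w\in A^*\}$ ($\varepsilon$ the empty word, $wS=\{wv\mid v\in S\}$). $F$ is the functor $FX=\mathbb I\times\mathbb I\times X^A$, $Ff=\mathrm{id}\times\mathrm{id}\times f^A$. $\Pi:\mathbb DA^\infty\to F\mathbb DA^\infty$ is $\Pi(m)=\langle m(A^\infty),m(\{\varepsilon\}),a\mapsto m_a\rangle$ with $m_a(S)=m(aS)$. An $F$-coalgebra morphism from $(Y,\beta)$ to $(\mathbb DA^\infty,\Pi)$ is a measurable $h$ with $\Pi\circ h=Fh\circ\beta$. *)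

(* Defs.v *)
From HB Require Import structures.
From mathcomp Require Import all_boot all_order all_algebra.
From mathcomp Require Import all_classical all_reals all_analysis.
From mathcomp Require Import measurable_realfun giry.
Set Implicit Arguments.
Unset Strict Implicit.
Unset Printing Implicit Defensive.
Import Order.TTheory GRing.Theory Num.Theory.
Local Open Scope classical_set_scope.
Local Open Scope ereal_scope.

Section LX_def.
Context {d : measure_display} (A : finType) (X : measurableType d).

Definition LXcar := option (A * X)%type.
Definition injL (a : A) (x : X) : LXcar := Some (a, x).

(* (P(A) (x) Sigma_X) (+) P(1), generated by the rectangles {a} x S and {*} *)
Definition LX_gen : set (set LXcar) :=
  [set B | exists a S, measurable S /\ B = injL a @` S] `|` [set [set None]].

Definition LX : Type := g_sigma_algebraType LX_gen.

Lemma measurable_injL (a : A) (S : set X) : measurable S ->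
  measurable (injL a @` S : set LX).
Proof. by move=> mS; apply: sub_gen_smallest; left; exists a, S. Qed.

Lemma measurable_one : measurable ([set None] : set LX).
Proof. by apply: sub_gen_smallest; right. Qed.
End LX_def.

Section tau_def.
Context {R : realType} {d : measure_display} (A : finType) (X : measurableType d).
Variables (alpha : X -> giry (LX A X) R)
  (malpha : measurable_fun [set: X] alpha) (a : A) (m : giry X R).

Let evm (B : set (LX A X)) : measurable B ->
  measurable_fun [set: X] (fun x => alpha x B).
Proof.
move=> mB; exact: (measurableT_comp (measurable_giry_ev mB) malpha).
Qed.

Let tau (S : set X) := \int[m]_x alpha x (injL a @` S).

Let tau0 : tau set0 = 0.
Proof. by rewrite /tau image_set0; under eq_integral do rewrite measure0; rewrite integral0. Qed.

Let tau_ge0 S : 0 <= tau S.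
Proof. by rewrite /tau integral_ge0. Qed.

Let tau_sigma_additive : semi_sigma_additive tau.
Proof.
move=> F mF tF mUF.
rewrite [X in _ --> X](_ : _ =
    \int[m]_x (\sum_(0 <= k <oo) alpha x (injL a @` F k))); last first.
  apply: eq_integral => x _; rewrite image_bigcup.
  apply/esym/cvg_lim => //; apply: measure_sigma_additive.
  - by move=> k; exact: measurable_injL.
  - move=> i j _ _ [p [[y Fiy <-] [z Fjz]]] [zy].
    by apply: tF => //; exists y; split => //; rewrite -zy.
rewrite [X in X @ _](_ : _ =
    (fun n => \int[m]_x (\sum_(0 <= i < n) alpha x (injL a @` F i)))); last first.
  apply/funext => n; rewrite -ge0_integral_sum// => k.
  by apply: evm; exact: measurable_injL.
apply: cvg_monotone_convergence => //.
- move=> n; apply: emeasurable_sum => k.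
  by apply: evm; exact: measurable_injL.
- by move=> n x _; rewrite sume_ge0.
- by move=> x _ i j ij; exact: ereal_nondecreasing_series.
Qed.

HB.instance Definition _ := isMeasure.Build d X R tau
  tau0 tau_ge0 tau_sigma_additive.

Let tau_setT : tau [set: X] <= 1.
Proof.
rewrite (@le_trans _ _ (\int[m]_x (cst 1 x)))//.
  apply: ge0_le_integral => //.
  - by apply: evm; exact: measurable_injL.
  - move=> x _; apply: (@le_trans _ _ (alpha x [set: LX A X])); last first.
      exact: sprobability_setT.
    by apply: le_measure => //; rewrite inE//; exact: measurable_injL.
by rewrite integral_cst// mul1e; exact: sprobability_setT.
Qed.

HB.instance Definition _ := Measure_isSubProbability.Build _ _ _ tau tau_setT.

Definition tauD : giry X R := tau.

Lemma tauDE S : tauD S = \int[m]_x alpha x (injL a @` S).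
Proof. by []. Qed.
End tau_def.

Inductive word (A : Type) : Type :=
| WFin of seq A
| WInf of (nat -> A).

HB.instance Definition _ (A : Type) := gen_eqMixin (word A).
HB.instance Definition _ (A : Type) := gen_choiceMixin (word A).
HB.instance Definition _ (A : Type) := isPointed.Build (word A) (WFin [::]).

Section words.
Context (A : finType).

Definition epsw : word A := WFin [::].

Definition wcons (a : A) (v : word A) : word A :=
  match v with
  | WFin u => WFin (a :: u)
  | WInf f => WInf (fun n => if n is n'.+1 then f n' else a)
  end.

Definition cyl (w : seq A) : set (word A) :=
  [set v | match v with
           | WFin u => exists t, u = w ++ t
           | WInf f => mkseq f (size w) = w
           end].

Definition S_inf : set (set (word A)) :=
  [set set0] `|` [set [set WFin w] | w in [set: seq A]]
             `|` [set cyl w | w in [set: seq A]].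

Definition Ainf : Type := g_sigma_algebraType S_inf.
End words.

Section coalg.
Context {R : realType} {d : measure_display} (A : finType) (X : measurableType d).
Variables (alpha : X -> giry (LX A X) R) (malpha : measurable_fun [set: X] alpha).

Definition beta1 (m : giry X R) : \bar R := \int[m]_x alpha x [set: LX A X].
Definition betaS (m : giry X R) : \bar R := \int[m]_x alpha x [set None].
Definition tau (a : A) (m : giry X R) : giry X R := tauD malpha a m.

(** h : D X -> D A^oo is an F-coalgebra morphism from tilde-alpha^# to Pi:
    h measurable and Pi (h m) = F h (tilde-alpha^# m), componentwise:
    (h m)(A^oo) = tilde-alpha^#_1 m, (h m)({eps}) = tilde-alpha^#_* m and
    (h m)_a = h (tau_a m) as measures, for each a. *)
Definition coalg_morph (h : giry X R -> giry (Ainf A) R) : Prop :=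
  measurable_fun [set: giry X R] h /\
  forall m : giry X R,
    [/\ h m [set: Ainf A] = beta1 m,
        h m [set epsw A] = betaS m &
        forall (a : A) (S : set (Ainf A)), measurable S ->
          h m (wcons a @` S) = h (tau a m) S].
End coalg.

(* Main.v *)
Require Import Defs.
From HB Require Import structures.
From mathcomp Require Import all_boot all_order all_algebra.
From mathcomp Require Import all_classical all_reals all_analysis.
From mathcomp Require Import measurable_realfun giry.
Import Order.TTheory GRing.Theory Num.Theory.
Local Open Scope classical_set_scope.
Local Open Scope ereal_scope.
Set Implicit Arguments.
Unset Strict Implicit.
Unset Printing Implicit Defensive.
Section words_lemmas.
Context (A : finType).

Definition zpre (z : word A) (n : nat) : seq A :=
  match z with WFin u => take n u | WInf f => mkseq f n end.

Lemma cylE (w : seq A) (z : word A) : cyl w z <-> zpre z (size w) = w.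
Proof.
case: z => [u|f] /=; last by [].
split=> [[t ->]|h]; first by rewrite take_size_cat.
by exists (drop (size w) u); rewrite -{1}(cat_take_drop (size w) u) h.
Qed.

Lemma zpre_take (z : word A) n k : (n <= k)%N -> zpre z n = take n (zpre z k).
Proof.
case: z => [u|f] /= nk; first by rewrite take_takel.
rewrite /mkseq -map_take; congr map.
by rewrite take_iota minnC (minn_idPr nk).
Qed.

Lemma size_zpre_inf (f : nat -> A) n : size (zpre (WInf f) n) = n.
Proof. by rewrite /= size_mkseq. Qed.

Lemma cyl_sub (v w : seq A) : v = take (size v) w -> cyl w `<=` cyl v.
Proof.
move=> vw z /cylE hz; apply/cylE.
have [le|lt] := leqP (size v) (size w).
  by rewrite (zpre_take _ le) hz.
have : (size v <= size w)%N by rewrite {1}vw size_take; apply: geq_minr.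
by rewrite leqNgt lt.
Qed.

Lemma cyl_prefix (v w : seq A) (z : word A) : cyl v z -> cyl w z ->
  (size v <= size w)%N -> v = take (size v) w.
Proof.
by move=> /cylE hv /cylE hw le; rewrite -{1}hv -hw (zpre_take _ le).
Qed.

Lemma S_inf_setI : setI_closed (@S_inf A).
Proof.
have cylI (v w : seq A) : (size v <= size w)%N -> S_inf (cyl v `&` cyl w).
  move=> le; have [[z [zv zw]]|/set0P/negP/negPn/eqP ->] :=
    pselect (cyl v `&` cyl w !=set0); last by left; left.
  have vw := cyl_prefix zv zw le.
  by rewrite setIidr; [right; exists w | exact: cyl_sub].
have wI (v w : seq A) : S_inf ([set WFin v] `&` cyl w).
  have [h|h] := pselect (cyl w (WFin v)).
    by rewrite setIidl; [left; right; exists v|move=> z ->].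
  by rewrite (_ : _ `&` _ = set0); [left; left|apply/seteqP; split=> // z [-> ]].
move=> X Y [[->|[v _ <-]]|[v _ <-]] [[->|[w _ <-]]|[w _ <-]];
  rewrite ?set0I ?setI0; try by left; left.
- have [->|ne] := eqVneq v w; first by rewrite setIid; left; right; exists w.
  by rewrite (_ : _ `&` _ = set0); [left; left|apply/seteqP; split=> // z [-> []]/eqP; rewrite (negbTE ne)].
- exact: wI.
- by rewrite setIC; exact: wI.
- have [le|lt] := leqP (size v) (size w); first exact: cylI.
  by rewrite setIC; apply: cylI; exact: ltnW.
Qed.

Lemma cyl_nil : cyl [::] = [set: word A].
Proof. by apply/seteqP; split=> // z _; apply/cylE; case: z => [u|f] //=; rewrite take0. Qed.

Lemma wcons_inj (a : A) : injective (wcons a).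
Proof.
move=> [u|f] [v|g] //=; first by case=> ->.
case=> e; congr WInf; apply/funext => n.
by have := congr1 (fun h => h n.+1) e.
Qed.

Lemma mkseq_cons (g : nat -> A) n : mkseq g n.+1 = g 0%N :: mkseq (fun k => g k.+1) n.
Proof.
rewrite /mkseq /=; congr cons.
have -> : iota 1 n = map (addn 1) (iota 0 n) by rewrite -iotaDl.
by rewrite -map_comp.
Qed.

Lemma wcons_cyl (a : A) (w : seq A) : wcons a @` cyl w = cyl (a :: w).
Proof.
apply/seteqP; split.
  move=> _ [z /cylE hz <-]; apply/cylE; rewrite [size _]/= -[in RHS]hz.
  case: z {hz} => [u|f]; first by [].
  by rewrite [zpre _ _]/= mkseq_cons.
move=> [u|f] /cylE /=.
  case: u => [|b u] //= [-> hu]; exists (WFin u) => //; exact/cylE.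
rewrite mkseq_cons => -[ha hf]; exists (WInf (fun n => f n.+1)).
  by apply/cylE; rewrite /= hf.
by rewrite /=; congr WInf; apply/funext => -[|n].
Qed.

Lemma wcons_fin (a : A) (w : seq A) : wcons a @` [set WFin w] = [set WFin (a :: w)].
Proof.
apply/seteqP; split; first by move=> _ [_ -> <-].
by move=> _ ->; exists (WFin w).
Qed.

Lemma Ainf_mgen (S : set (Ainf A)) : S_inf S -> measurable S.
Proof. by move=> h; apply: sub_gen_smallest. Qed.

Lemma measurable_cyl w : measurable (cyl w : set (Ainf A)).
Proof. by apply: Ainf_mgen; right; exists w. Qed.

Lemma measurable_fin w : measurable ([set WFin w] : set (Ainf A)).
Proof. by apply: Ainf_mgen; left; right; exists w. Qed.

Lemma measurable_wcons (a : A) (S : set (Ainf A)) : measurable S ->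
  measurable (wcons a @` S : set (Ainf A)).
Proof.
move=> mS.
pose H := [set S : set (Ainf A) | measurable (wcons a @` S : set (Ainf A))].
suff: <<s @S_inf A >> `<=` H by apply.
apply: smallest_sub.
  split.
  - by rewrite /H /= image_set0.
  - move=> B HB; rewrite /H /= setTD.
    have -> : wcons a @` (~` B) = cyl [:: a] `\` wcons a @` B.
      apply/seteqP; split.
        move=> _ [z nB <-]; split; first by rewrite -wcons_cyl cyl_nil; exists z.
        by move=> [y By /wcons_inj yz]; apply: nB; rewrite -yz.
      move=> z [+ nB]; rewrite -wcons_cyl => -[y _ yz]; exists y => //.
      by move=> By; apply: nB; exists y.
    by apply: measurableD => //; exact: measurable_cyl.
  - by move=> F HF; rewrite /H /= image_bigcup; exact: bigcupT_measurable.
move=> B [[->|[w _ <-]]|[w _ <-]]; rewrite /H /=.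
- by rewrite image_set0.
- by rewrite wcons_fin; exact: measurable_fin.
- by rewrite wcons_cyl; exact: measurable_cyl.
Qed.

End words_lemmas.
Section construction.
Local Open Scope ring_scope.
Context (R : realType) (A : finType) (P Q : seq A -> R).
Hypotheses (P0 : forall w, 0 <= P w) (Q0 : forall w, 0 <= Q w)
  (PQ : forall w, P w = Q w + \sum_(a : A) P (rcons w a)).

Let n := #|A|.
Let F (w : seq A) (i : 'I_n) := P (rcons w (enum_val i)).
Let psum (w : seq A) (k : nat) := \sum_(i < n | (i < k)%N) F w i.

Let psum_ge0 w k : 0 <= psum w k.
Proof. by apply: sumr_ge0 => i _; exact: P0. Qed.

Let psum_tot w : psum w n = \sum_(a : A) P (rcons w a).
Proof.
transitivity (\sum_(i < n) F w i).
  by apply: eq_bigl => i; rewrite ltn_ord.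
by rewrite (big_enum_val (fun a => P (rcons w a))).
Qed.

Let psumS w (i : 'I_n) : psum w i.+1 = psum w i + F w i.
Proof.
rewrite /psum (bigD1 i) ?ltnSn //= addrC; congr (_ + _).
by apply: eq_bigl => j; rewrite ltnS ltn_neqAle andbC -val_eqE.
Qed.

Let psum_mono w k l : (k <= l)%N -> psum w k <= psum w l.
Proof.
move=> kl; rewrite /psum [leRHS](bigID (fun i : 'I_n => (i < k)%N)) /=.
rewrite -[leLHS]addr0 lerD //; last by apply: sumr_ge0 => i _; exact: P0.
rewrite le_eqVlt; apply/orP; left; apply/eqP; apply: eq_bigl => i.
by case: (ltnP i k) => ik; rewrite ?andbF ?andbT // (leq_trans ik kl).
Qed.

Fixpoint st (p w : seq A) : R :=
  match w with
  | [::] => 0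
  | a :: w' => Q p + psum p (enum_rank a) + st (rcons p a) w'
  end.

Let s w := st [::] w.

Let st_rcons p w a :
  st p (rcons w a) = st p w + Q (p ++ w) + psum (p ++ w) (enum_rank a).
Proof.
elim: w p => [|b w IH] p /=; first by rewrite cats0 add0r addr0.
by rewrite IH cat_rcons !addrA.
Qed.

Let s_rcons w a : s (rcons w a) = s w + Q w + psum w (enum_rank a).
Proof. by rewrite /s st_rcons. Qed.

Definition Iw (w : seq A) : set R := [set u | s w <= u /\ u < s w + P w].
Definition Jw (w : seq A) : set R := [set u | s w <= u /\ u < s w + Q w].

Let Fr w a : F w (enum_rank a) = P (rcons w a).
Proof. by rewrite /F enum_rankK. Qed.

Lemma Iw_rcons w a : Iw (rcons w a) `<=` Iw w.
Proof.
move=> u []; rewrite s_rcons => h1 h2; split.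
  by apply: le_trans h1; rewrite -addrA lerDl addr_ge0.
apply: (lt_le_trans h2); rewrite -!addrA lerD2l (PQ w) lerD2l -Fr -psumS.
by rewrite -psum_tot; apply: psum_mono.
Qed.

Lemma Jw_Iw w : Jw w `<=` Iw w.
Proof.
move=> u [h1 h2]; split => //; apply: (lt_le_trans h2).
by rewrite lerD2l (PQ w) lerDl -psum_tot.
Qed.

Lemma JI_disj w a u : Jw w u -> Iw (rcons w a) u -> False.
Proof.
move=> [_ h2] [+ _]; rewrite s_rcons => h1.
have h3 : s w + Q w <= u by apply: le_trans h1; rewrite lerDl psum_ge0.
by move: (lt_le_trans h2 h3); rewrite ltxx.
Qed.

Lemma II_disj w a b u : a != b -> Iw (rcons w a) u -> Iw (rcons w b) u -> False.
Proof.
have key c e : (enum_rank c < enum_rank e)%N ->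
    Iw (rcons w c) u -> Iw (rcons w e) u -> False.
  move=> ce [_ h2] [h1 _]; move: h1 h2; rewrite !s_rcons => h1 h2.
  have := le_lt_trans h1 h2; rewrite -!addrA ltrD2l ltrD2l -Fr -psumS.
  by rewrite ltNge psum_mono.
move=> ab hu hv; have : enum_rank a != enum_rank b.
  by apply: contra ab => /eqP /enum_rank_inj ->.
rewrite neq_ltn => /orP[ab'|ba']; [exact: key ab' hu hv|exact: key ba' hv hu].
Qed.

Lemma Iw_cover w u : Iw w u -> ~ Jw w u -> exists a, Iw (rcons w a) u.
Proof.
move=> [h1 h2] nJ; apply/not_existsP => nI.
have base : s w + Q w <= u.
  by rewrite leNgt; apply/negP => h; apply: nJ.
suff: forall k, (k <= n)%N -> s w + Q w + psum w k <= u.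
  move=> /(_ n (leqnn _)); rewrite psum_tot -addrA -PQ.
  by rewrite leNgt h2.
elim=> [_|k IH kn]; first by rewrite /psum big_pred0 ?addr0.
have {}IH := IH (ltnW kn).
pose i := Ordinal kn; pose a := enum_val i.
have ri : enum_rank a = i by rewrite enum_valK.
have := nI a; rewrite /Iw s_rcons ri /= => nIa.
have : ~ (u < s w + Q w + psum w i + P (rcons w a)).
  by move=> h; apply: nIa; split.
have E : psum w k.+1 = psum w i + P (rcons w a) by exact: psumS w i.
by rewrite E addrA => /negP; rewrite -leNgt.
Qed.


Lemma Iw_cat w t : Iw (w ++ t) `<=` Iw w.
Proof.
elim/last_ind: t => [|t a IH]; first by rewrite cats0.
by rewrite -rcons_cat => u /Iw_rcons /IH.
Qed.

Lemma Iw_take w k : Iw w `<=` Iw (take k w).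
Proof. by rewrite -{1}(cat_take_drop k w); exact: Iw_cat. Qed.

Lemma Iw_uniq v w u : size v = size w -> Iw v u -> Iw w u -> v = w.
Proof.
elim/last_ind: v w => [|v a IH] w; first by case: w.
case/lastP: w => [|w b]; first by rewrite size_rcons.
rewrite !size_rcons => -[sz] hv hw.
have vw := IH _ sz (Iw_rcons hv) (Iw_rcons hw); subst w.
have [->//|ab] := eqVneq a b.
by case: (II_disj ab hv hw).
Qed.

Lemma Iw_take_eq v w u : Iw w u -> Iw v u -> (size v <= size w)%N ->
  v = take (size v) w.
Proof.
move=> hw hv le.
have ht : Iw (take (size v) w) u by exact: Iw_take.
apply: (Iw_uniq _ hv ht).
by rewrite size_take; case: ltngtP le.
Qed.

Lemma JI_long v w u : Jw v u -> Iw w u -> (size v < size w)%N -> False.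
Proof.
move=> hJ hw lt.
have [x0 _] : exists x0 : A, True by case: w {hw} lt => [|x _] //; exists x.
have h : Iw (take (size v).+1 w) u by exact: Iw_take.
rewrite (take_nth x0 lt) in h.
have vt : take (size v) w = v := esym (Iw_take_eq hw (Jw_Iw hJ) (ltnW lt)).
rewrite vt in h; exact: JI_disj hJ h.
Qed.

Lemma Jw_uniq v w u : Jw v u -> Jw w u -> v = w.
Proof.
move=> hv hw; have [lt|gt|eq] := ltngtP (size v) (size w).
- by case: (JI_long hv (Jw_Iw hw) lt).
- by case: (JI_long hw (Jw_Iw hv) gt).
- exact: Iw_uniq eq (Jw_Iw hv) (Jw_Iw hw).
Qed.

Lemma exists_len u : Iw [::] u -> (forall v, ~ Jw v u) ->
  forall k, exists w, size w = k /\ Iw w u.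
Proof.
move=> h0 nJ; elim=> [|k [w [sw hw]]]; first by exists [::].
have [a ha] := Iw_cover hw (nJ w).
by exists (rcons w a); rewrite size_rcons sw.
Qed.


Definition phi (u : R) : word A :=
  if pselect (exists v, Jw v u) is left _ then WFin (xget [::] (fun v => Jw v u))
  else match [pick a : A] with
       | Some a0 => WInf (fun k => nth a0 (xget [::] (fun v => size v = k.+1 /\ Iw v u)) k)
       | None => WFin [::]
       end.

Let elt u : Iw [::] u -> ~ (exists v, Jw v u) -> exists a : A, True.
Proof.
move=> h0 nex.
have [w [sw _]] := exists_len h0 (fun v hv => nex (ex_intro _ v hv)) 1.
by case: w sw => [|x ?] // _; exists x.
Qed.

Lemma phi_fin u w : Iw [::] u -> (phi u = WFin w <-> Jw w u).
Proof.
move=> h0; rewrite /phi; case: pselect => [ex|nex].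
  have hx := xgetPex [::] ex.
  by split => [[<-]//|hw]; congr WFin; exact: Jw_uniq hx hw.
have [a0 _] := elt h0 nex.
case: pickP => [a1 _|none]; last by have := none a0.
by split => [//|hw]; exfalso; apply: nex; exists w.
Qed.

Lemma phi_cyl u w : Iw [::] u -> (cyl w (phi u) <-> Iw w u).
Proof.
move=> h0; rewrite /phi; case: pselect => [ex|nex].
  have hv := xgetPex [::] ex; set v := xget _ _ in hv *.
  split.
    move=> /cylE /= e.
    have ht : Iw (take (size w) v) u by apply: Iw_take; exact: Jw_Iw.
    by rewrite e in ht.
  move=> hw; apply/cylE => /=.
  have [lt|ge] := ltnP (size v) (size w); first by case: (JI_long hv hw lt).
  by rewrite -(Iw_take_eq (Jw_Iw hv) hw ge).
have [a0 _] := elt h0 nex.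
case: pickP => [a1 _|none]; last by have := none a0.
pose W k := xget [::] (fun v => size v = k /\ Iw v u).
have hW k : size (W k) = k /\ Iw (W k) u.
  have nJ : forall v, ~ Jw v u by move=> v hv; apply: nex; exists v.
  exact: (xgetPex [::] (exists_len h0 nJ k)).
have mk k : mkseq (fun k => nth a1 (W k.+1) k) k = W k.
  elim: k => [|k IH]; first by have [/size0nil -> _] := hW 0%N.
  rewrite mkseqS IH.
  have [s1 i1] := hW k.+1; have [s0 i0] := hW k.
  have e : W k = take k (W k.+1).
    by rewrite -{2}s0; apply: Iw_take_eq i1 i0 _; rewrite s0 s1.
  rewrite e -take_nth; last by rewrite s1.
  by rewrite take_oversize // s1.
split.
  move=> /cylE; rewrite /zpre mk => e.
  by have := (hW (size w)).2; rewrite e.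
move=> hw; apply/cylE; rewrite /zpre mk.
by apply: Iw_uniq (hW _).1 (hW _).2 hw.
Qed.


Lemma Iw_itv w : Iw w = [set` Interval (BLeft (s w)) (BLeft (s w + P w))].
Proof. by apply/seteqP; split => u; rewrite /= in_itv /=; [move=> [-> ->] | move=> /andP[]]. Qed.

Lemma Jw_itv w : Jw w = [set` Interval (BLeft (s w)) (BLeft (s w + Q w))].
Proof. by apply/seteqP; split => u; rewrite /= in_itv /=; [move=> [-> ->] | move=> /andP[]]. Qed.

Lemma lebesgue_co (x y : R) : 0 <= y ->
  lebesgue_measure [set` Interval (BLeft x) (BLeft (x + y))] = y%:E.
Proof.
move=> y0; rewrite lebesgue_measure_itv /= lte_fin.
case: ifPn => [_|]; first by rewrite -EFinD addrAC subrr add0r.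
by rewrite ltrDl -leNgt => y0'; apply/eqP; rewrite eq_sym eqe; apply/eqP/le_anti/andP.
Qed.

Lemma measurable_Iw w : measurable (Iw w). Proof. by rewrite Iw_itv; exact: measurable_itv. Qed.
Lemma measurable_Jw w : measurable (Jw w). Proof. by rewrite Jw_itv; exact: measurable_itv. Qed.

Let D := Iw [::].

Lemma D_phi_fin w : D `&` phi @^-1` [set WFin w] = Jw w.
Proof.
apply/seteqP; split => u.
  by move=> [hD /= e]; exact/(phi_fin w hD).
move=> hJ; have hD : D u.
  by apply: (@Iw_cat [::] w); exact: Jw_Iw.
by split => //; exact/(phi_fin w hD).
Qed.


Lemma D_phi_cyl w : D `&` phi @^-1` cyl w = Iw w.
Proof.
apply/seteqP; split => u.
  by move=> [hD /= e]; exact/(phi_cyl w hD).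
move=> hI; have hD : D u by apply: (@Iw_cat [::] w).
by split => //; exact/(phi_cyl w hD).
Qed.

Lemma measurable_phi : measurable_fun D (phi : R -> Ainf A).
Proof.
apply: (@measurability _ _ R (Ainf A) D phi (@S_inf A)) => //.
move=> _ [B [[->|[w _ <-]]|[w _ <-]] <-].
- by rewrite preimage_set0 setI0.
- by rewrite D_phi_fin; exact: measurable_Jw.
- by rewrite D_phi_cyl; exact: measurable_Iw.
Qed.

Let mD : measurable D := measurable_Iw [::].

Let nu (S : set (Ainf A)) := lebesgue_measure (D `&` phi @^-1` S).

Let nu0 : nu set0 = 0%E.
Proof. by rewrite /nu preimage_set0 setI0 measure0. Qed.

Let nu_ge0 S : (0 <= nu S)%E.
Proof. exact: measure_ge0. Qed.

Let nu_sigma_additive : semi_sigma_additive nu.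
Proof.
move=> G mG tG mUG; rewrite /nu preimage_bigcup setI_bigcupr.
apply: measure_semi_sigma_additive.
- by move=> k; exact: measurable_phi.
- apply/trivIsetP => /= i j _ _ ij; rewrite setIACA setIid -preimage_setI.
  by move/trivIsetP : tG => /(_ _ _ _ _ ij) ->//; rewrite preimage_set0 setI0.
- by rewrite -setI_bigcupr -preimage_bigcup; exact: measurable_phi.
Qed.

HB.instance Definition _ := isMeasure.Build _ _ _ nu nu0 nu_ge0 nu_sigma_additive.

Hypothesis P1 : P [::] <= 1.

Let nu_setT : (nu [set: Ainf A] <= 1)%E.
Proof.
by rewrite /nu preimage_setT setIT /D Iw_itv (lebesgue_co _ (P0 _)) lee_fin.
Qed.

HB.instance Definition _ := Measure_isSubProbability.Build _ _ _ nu nu_setT.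

Definition nuG : giry (Ainf A) R := nu.

Lemma nuG_cyl w : nuG (cyl w) = (P w)%:E.
Proof. by rewrite /= /nu D_phi_cyl Iw_itv (lebesgue_co _ (P0 _)). Qed.

Lemma nuG_fin w : nuG [set WFin w] = (Q w)%:E.
Proof. by rewrite /= /nu D_phi_fin Jw_itv (lebesgue_co _ (Q0 _)). Qed.

End construction.
Section img_measure.
Context (R : realType) (A : finType) (nu : giry (Ainf A) R) (a : A).

Definition im (S : set (Ainf A)) := nu (wcons a @` S).

Let im0 : im set0 = 0. Proof. by rewrite /im image_set0 measure0. Qed.
Let im_ge0 S : 0 <= im S. Proof. exact: measure_ge0. Qed.

Lemma image_wcons_setI (U V : set (Ainf A)) :
  wcons a @` (U `&` V) = wcons a @` U `&` wcons a @` V.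
Proof.
apply/seteqP; split; first by move=> _ [z [hU hV] <-]; split; exists z.
by move=> _ [[z hz <-] [y hy /wcons_inj yz]]; exists z => //; split => //; rewrite -yz.
Qed.

Let im_sigma_additive : semi_sigma_additive im.
Proof.
move=> F mF tF mUF; rewrite /im image_bigcup.
apply: measure_semi_sigma_additive.
- by move=> k; exact: measurable_wcons.
- apply/trivIsetP => /= i j _ _ ij; rewrite -image_wcons_setI.
  by move/trivIsetP : tF => /(_ _ _ _ _ ij) ->//; rewrite image_set0.
- by rewrite -image_bigcup; exact: measurable_wcons.
Qed.

HB.instance Definition _ := isMeasure.Build _ _ _ im im0 im_ge0 im_sigma_additive.

End img_measure.

Lemma giry_uniq (R : realType) (A : finType) (n2 : giry (Ainf A) R)
    (n1 : ({measure set (Ainf A) -> \bar R})%R) :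
  n1 [set: Ainf A] < +oo -> (forall S, S_inf S -> n1 S = n2 S) ->
  forall S, measurable S -> n1 S = n2 S.
Proof.
move=> fin h S mS.
apply: (@measure_unique _ R (Ainf A) (@S_inf A) (fun _ => [set: Ainf A]) erefl
  (@S_inf_setI A) _ _ n1 n2 h _ S mS).
- by move=> _; rewrite -cyl_nil; right; exists [::].
- by rewrite bigcup_const.
- by [].
Qed.
Section main.
Context (R : realType) (d : measure_display) (X : measurableType d) (A : finType)
  (alpha : X -> giry (LX A X) R) (malpha : measurable_fun [set: X] alpha)
  (alpha_prob : forall x : X, alpha x [set: LX A X] = 1).

Local Notation T a := (tau malpha a).

Lemma mev (B : set (LX A X)) : measurable B ->
  measurable_fun [set: X] (fun x => alpha x B).
Proof. by move=> mB; exact: (measurableT_comp (measurable_giry_ev mB) malpha). Qed.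

Lemma beta1E (n : giry X R) : beta1 alpha n = n [set: X].
Proof.
rewrite /beta1; under eq_integral do rewrite alpha_prob.
by rewrite integral_cst // mul1e.
Qed.

Lemma alpha_split (x : X) : alpha x [set: LX A X] =
  alpha x [set None] + \sum_(a : A) alpha x (injL a @` [set: X]).
Proof.
have -> : [set: LX A X] = [set None] `|` \bigcup_(a in [set: A]) (injL a @` [set: X]).
  by apply/seteqP; split => // -[[a y]|] _; [right; exists a => //; exists y|left].
rewrite (@measureU _ _ _ (alpha x)); first last.
- by apply/seteqP; split => // z [-> [a _ [y _]]].
- by apply: fin_bigcup_measurable; [exact: finite_finset|move=> a _; exact: measurable_injL].
- exact: measurable_one.
congr (_ + _).
rewrite measure_fin_bigcup; first last.
- by move=> a _; exact: measurable_injL.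
- apply/trivIsetP => a b _ _ ab; apply/seteqP; split => // z [[y _ <-] [y' _]].
  by case=> ba _; move: ab; rewrite ba eqxx.
- exact: finite_finset.
rewrite (fsbigE (enum A)) ?enum_uniq //; last by move=> i _; rewrite mem_enum.
by rewrite big_enum_cond /=; apply: eq_bigl => a; rewrite in_setT.
Qed.

Lemma part1 (m : giry X R) :
  beta1 alpha m = betaS alpha m + \sum_(a : A) beta1 alpha (T a m).
Proof.
under eq_bigr do rewrite beta1E /tau tauDE.
have mi a : measurable_fun [set: X] (fun x => alpha x (injL a @` [set: X])).
  by apply: mev; exact: measurable_injL.
rewrite /betaS -(ge0_integral_sum _ measurableT mi); last first.
  by move=> a x _; exact: measure_ge0.
rewrite -ge0_integralD //.
- by apply: eq_integral => x _; rewrite alpha_split.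
- by apply: mev; exact: measurable_one.
- by move=> x _; apply: sume_ge0 => a _; exact: measure_ge0.
- by apply: emeasurable_sum => a; exact: mi.
Qed.


Lemma measurable_T a : measurable_fun [set: giry X R] (T a).
Proof.
apply: measurable_giry_codensity => // S mS.
have -> : (fun m => T a m S) = giry_int ^~ (fun x => alpha x (injL a @` S)).
  by apply/funext => m; rewrite /tau tauDE.
apply: measurable_giry_int => //; apply: mev; exact: measurable_injL.
Qed.

Fixpoint Mw (w : seq A) (m : giry X R) : giry X R :=
  if w is a :: w' then Mw w' (T a m) else m.

Lemma Mw_rcons w a m : Mw (rcons w a) m = T a (Mw w m).
Proof. by elim: w m => [|b w IH] m //=. Qed.

Lemma measurable_Mw w : measurable_fun [set: giry X R] (Mw w).
Proof.
elim: w => [|a w IH] /=; first exact: measurable_id.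
exact: measurableT_comp IH (measurable_T a).
Qed.

Lemma measurable_beta1 : measurable_fun [set: giry X R] (beta1 alpha).
Proof. by apply: measurable_giry_int => //; exact: mev. Qed.

Lemma measurable_betaS : measurable_fun [set: giry X R] (betaS alpha).
Proof. by apply: measurable_giry_int => //; apply: mev; exact: measurable_one. Qed.

Lemma beta1_ge0 n : 0 <= beta1 alpha n.
Proof. by rewrite beta1E. Qed.

Lemma betaS_ge0 n : 0 <= betaS alpha n.
Proof. by apply: integral_ge0 => x _. Qed.

Lemma beta1_fin n : beta1 alpha n \is a fin_num.
Proof.
rewrite ge0_fin_numE ?beta1_ge0 // beta1E.
by rewrite (le_lt_trans (@sprobability_setT _ _ _ n)) // ltry.
Qed.

Lemma betaS_le n : betaS alpha n <= beta1 alpha n.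
Proof.
rewrite part1 leeDl //; apply: sume_ge0 => a _; exact: beta1_ge0.
Qed.

Lemma betaS_fin n : betaS alpha n \is a fin_num.
Proof.
rewrite ge0_fin_numE ?betaS_ge0 //.
apply: (le_lt_trans (betaS_le n)); rewrite -ge0_fin_numE ?beta1_ge0 //.
exact: beta1_fin.
Qed.

Definition Pm m w := fine (beta1 alpha (Mw w m)).
Definition Qm m w := fine (betaS alpha (Mw w m)).

Lemma Pm_ge0 m w : (0 <= Pm m w)%R.
Proof. exact/fine_ge0/beta1_ge0. Qed.

Lemma Qm_ge0 m w : (0 <= Qm m w)%R.
Proof. exact/fine_ge0/betaS_ge0. Qed.

Lemma PQm m w : Pm m w = (Qm m w + \sum_(a : A) Pm m (rcons w a))%R.
Proof.
apply: EFin_inj; rewrite EFinD -sumEFin /Pm /Qm !fineK ?beta1_fin ?betaS_fin //.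
under eq_bigr do rewrite fineK ?beta1_fin // Mw_rcons.
exact: part1.
Qed.

Lemma Pm1 m : (Pm m [::] <= 1)%R.
Proof.
rewrite -lee_fin /Pm fineK ?beta1_fin // beta1E; exact: sprobability_setT.
Qed.

Definition hh (m : giry X R) : giry (Ainf A) R :=
  nuG (Pm_ge0 m) (Qm_ge0 m) (PQm m) (Pm1 m).

Lemma hh_cyl m w : hh m (cyl w) = beta1 alpha (Mw w m).
Proof. by rewrite /hh nuG_cyl /Pm fineK // beta1_fin. Qed.

Lemma hh_fin m w : hh m [set WFin w] = betaS alpha (Mw w m).
Proof. by rewrite /hh nuG_fin /Qm fineK // betaS_fin. Qed.


Lemma morph_cyl (h' : giry X R -> giry (Ainf A) R) : coalg_morph malpha h' ->
  forall w m, h' m (cyl w) = beta1 alpha (Mw w m) /\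
              h' m [set WFin w] = betaS alpha (Mw w m).
Proof.
move=> [_ hm]; elim=> [|a w IH] m.
  by have [h1 h2 _] := hm m; rewrite cyl_nil.
have [_ _ h3] := hm m; have [e1 e2] := IH (T a m).
rewrite /= -e1 -e2 -wcons_cyl -wcons_fin.
split; first by rewrite h3 //; exact: measurable_cyl.
by rewrite h3 //; exact: measurable_fin.
Qed.

Lemma giry_fin (n : giry (Ainf A) R) : n [set: Ainf A] < +oo.
Proof. by rewrite (le_lt_trans (@sprobability_setT _ _ _ n)) // ltry. Qed.

Lemma hh_law m (a : A) (S : set (Ainf A)) : measurable S -> hh m (wcons a @` S) = hh (T a m) S.
Proof.
move=> mS; have -> : hh m (wcons a @` S) = im (hh m) a S by [].
apply: giry_uniq => //.
  rewrite /im (le_lt_trans _ (giry_fin (hh m))) //.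
  apply: le_measure => //; rewrite inE //; apply: measurable_wcons => //.
move=> U hU; change (hh m (wcons a @` U) = hh (T a m) U).
case: hU => [[->|[w _ <-]]|[w _ <-]].
- by rewrite image_set0 !measure0.
- by rewrite wcons_fin !hh_fin.
- by rewrite wcons_cyl !hh_cyl.
Qed.


Lemma hh_setT m : hh m [set: Ainf A] = beta1 alpha m.
Proof. by rewrite -cyl_nil hh_cyl. Qed.

Lemma measurable_hh : measurable_fun [set: giry X R] hh.
Proof.
apply: measurable_giry_codensity => // B mB.
pose H := [set B : set (Ainf A) | measurable B /\
  measurable_fun [set: giry X R] (fun m => hh m B)].
suff: <<s @S_inf A >> `<=` H by move=> /(_ B mB) [].
apply: (@lambda_system_subset _ _ (@S_inf_setI A) setT H) => //.
- apply/dynkin_lambda_system; split.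
  + split => //; under eq_fun do rewrite hh_setT; exact: measurable_beta1.
  + move=> U [mU hU]; split; first exact: measurableC.
    have -> : (fun m => hh m (~` U)) = (fun m => hh m [set: Ainf A] - hh m U).
      apply/funext => m; rewrite -setTD measureD // ?setTI //.
      exact: giry_fin.
    apply: emeasurable_funB => //.
    under eq_fun do rewrite hh_setT; exact: measurable_beta1.
  + move=> F tF HF; split; first by apply: bigcupT_measurable => k; exact: (HF k).1.
    have -> : (fun m => hh m (\bigcup_k F k)) =
        (fun m => \sum_(0 <= k <oo) hh m (F k)).
      apply/funext => m; rewrite measure_bigcup //; last by move=> k _; exact: (HF k).1.
      by apply: eq_eseriesl => k; rewrite in_setT.
    apply: ge0_emeasurable_sum => k; first by move=> x _ _; exact: measure_ge0.
    by move=> _; exact: (HF k).2.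
- move=> U [[->|[w _ <-]]|[w _ <-]]; split.
  + exact: measurable0.
  + by under eq_fun do rewrite measure0; exact: measurable_cst.
  + exact: measurable_fin.
  + under eq_fun do rewrite hh_fin.
    exact: measurableT_comp measurable_betaS (measurable_Mw w).
  + exact: measurable_cyl.
  + under eq_fun do rewrite hh_cyl.
    exact: measurableT_comp measurable_beta1 (measurable_Mw w).
Qed.


Lemma int_T a m (g : X -> \bar R) : measurable_fun [set: X] g -> (forall x, 0 <= g x) ->
  giry_int (T a m) g = \int[m]_x giry_int (T a (giry_ret x)) g.
Proof.
move=> mg g0.
have mk : measurable_fun [set: X] (fun x => T a (giry_ret x)).
  exact: measurableT_comp (measurable_T a) measurable_giry_ret.
have e S : measurable S -> T a m S = giry_bind m mk S.
  move=> mS; rewrite /giry_bind /=.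
  change (T a m S = giry_int (giry_map mk m) (giry_ev ^~ S)).
  have h1 : measurable_fun [set: giry X R] (giry_ev ^~ S) by exact: measurable_giry_ev.
  have h2 : forall mu : giry X R, 0 <= giry_ev mu S by move=> mu; exact: measure_ge0.
  rewrite giry_int_map //.
  change (tauD malpha a m S = \int[m]_x tauD malpha a (giry_ret x) S).
  rewrite tauDE; apply: eq_integral => x _.
  rewrite tauDE /giry_ret integral_dirac //; last first.
    by apply: mev; exact: measurable_injL.
  by rewrite diracT mul1e.
rewrite /giry_int (eq_measure_integral (giry_bind m mk)); last first.
  by move=> S mS _; exact: e.
exact: giry_int_bind.
Qed.

Lemma int_Mw w m (f : X -> \bar R) : measurable_fun [set: X] f -> (forall x, 0 <= f x) ->
  giry_int (Mw w m) f = \int[m]_x giry_int (Mw w (giry_ret x)) f.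
Proof.
move=> mf f0; elim: w m => [|a w IH] m /=.
  by apply: eq_integral => x _; rewrite giry_int_ret.
transitivity (giry_int (T a m) (fun y => giry_int (Mw w (giry_ret y)) f)).
  exact: IH.
rewrite int_T; last 2 first.
- apply: measurableT_comp (measurable_giry_int mf f0) _.
  exact: measurableT_comp (measurable_Mw w) measurable_giry_ret.
- by move=> y; exact: integral_ge0.
by apply: eq_integral => x _; rewrite IH.
Qed.

Lemma main_result :
  (forall m : giry X R,
      beta1 alpha m = betaS alpha m + \sum_(a : A) beta1 alpha (tau malpha a m)) /\
  exists h : giry X R -> giry (Ainf A) R,
    [/\ coalg_morph malpha h,
        (forall h' : giry X R -> giry (Ainf A) R, coalg_morph malpha h' ->
           forall (m : giry X R) (S : set (Ainf A)), measurable S -> h' m S = h m S) &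
        (forall (m : giry X R) (S : set (Ainf A)), @S_inf A S ->
           h m S = \int[m]_x h (giry_ret x) S)].
Proof.
split; first exact: part1.
exists hh; split.
- split; first exact: measurable_hh.
  move=> m; split.
  + exact: hh_setT.
  + exact: (hh_fin m [::]).
  + by move=> a S mS; exact: hh_law.
- move=> h' hm m S mS.
  apply: (giry_uniq (n1 := h' m) (giry_fin _)) => // U.
  case=> [[->|[w _ <-]]|[w _ <-]].
  + by rewrite !measure0.
  + by rewrite hh_fin; exact: (morph_cyl hm w m).2.
  + by rewrite hh_cyl; exact: (morph_cyl hm w m).1.
- move=> m S [[->|[w _ <-]]|[w _ <-]].
  + rewrite measure0; under eq_integral do rewrite measure0.
    by rewrite integral0.
  + rewrite hh_fin; under eq_integral do rewrite hh_fin.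
    by apply: int_Mw => //; apply: mev; exact: measurable_one.
  + rewrite hh_cyl; under eq_integral do rewrite hh_cyl.
    by apply: int_Mw => //; exact: mev.
Qed.

End main.

Theorem mainTheorem12 (R : realType) (d : measure_display)
  (X : measurableType d) (A : finType)
  (alpha : X -> giry (LX A X) R)
  (malpha : measurable_fun [set: X] alpha)
  (alpha_prob : forall x : X, alpha x [set: LX A X] = 1) :
  (forall m : giry X R,
      beta1 alpha m = betaS alpha m + \sum_(a : A) beta1 alpha (tau malpha a m)) /\
  exists h : giry X R -> giry (Ainf A) R,
    [/\ coalg_morph malpha h,
        (forall h' : giry X R -> giry (Ainf A) R, coalg_morph malpha h' ->
           forall (m : giry X R) (S : set (Ainf A)), measurable S -> h' m S = h m S) &
        (forall (m : giry X R) (S : set (Ainf A)), @S_inf A S ->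
           h m S = \int[m]_x h (giry_ret x) S)].
Proof. exact: main_result. Qed.
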